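(* Let $k\ge1$ and let $g$ be a variable of type level $k+2$. If $\Gamma\vdash t$ is $g$-regular and ${\mathrm{PCF}}^\Omega_k$-denotable, then any inductive generation of the denotability of $\Gamma\vdash t$ via the following six rules consists entirely of $g$-regular procedures-in-environment: 1. from denotable $\Gamma\vdash q_i$ ($i<r$) and $x\in\Gamma$, infer $\Gamma\vdash\lambda.\mathtt{case}\ x\,q_0\cdots q_{r-1}\ \mathtt{of}\ (j\Rightarrow j)$; 2. from $\Gamma,x\vdash p$ infer $\Gamma\vdash\lambda x.p$; 3. $\Gamma\vdash\lambda.n$; 4. from $\Gamma\vdash p$ and $f:\mathbb{N}\rightharpoonup\mathbb{N}$ infer $\Gamma\vdash p[i\mapsto f(i)]$; 5. from $\Gamma\vdash p$, $\Gamma\vdash\lambda.d$, $\Gamma\vdash\lambda.e$ infer $\Gamma\vdash p[0\mapsto d,\ i+1\mapsto e]$; 6. from $\Gamma\vdash\lambda z^\sigma x_0^{\sigma_0}\cdots x_{r-1}^{\sigma_{r-1}}.e$ with $\sigma=\sigma_0,\ldots,\sigma_{r-1}\rightarrow\mathbb{N}$ of level $\le k$ and $\Gamma\vdash q_i:\sigma_i$, infer $\Gamma\vdash\lambda.\langle\!\langle\Pi_{\Gamma,Z}(e,\xi)\rangle\!\rangle$ where $Z=z,\vec x$ is disjoint from $\Gamma$, $\xi(z)=\lambda\vec x.e$, $\xi(x_i)=q_i$.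
   Context: Levels: ${\mathrm{lv}}(\mathbb{N})=0$, ${\mathrm{lv}}(\sigma\rightarrow\tau)=\max({\mathrm{lv}}\,\sigma+1,{\mathrm{lv}}\,\tau)$. ${\mathrm{PCF}}^\Omega_k$: simply typed $\lambda$-calculus over $\mathbb{N}$ with $\underline n,\mathit{suc},\mathit{pre},\mathit{ifzero}$, oracle constants $C_f$ ($f:\mathbb{N}\rightharpoonup\mathbb{N}$) and $Y_\sigma$ only for ${\mathrm{lv}}(\sigma)\le k$. NSPs: coinductively generated well-typed trees $p::=\lambda\vec x.e$, $e::=\bot\mid n\mid\mathtt{case}\ a\ \mathtt{of}\ (i\Rightarrow e_i\mid i\in\mathbb{N})$, $a::=x\,q_0\cdots q_{r-1}$, modulo $\alpha$; $\langle\!\langle-\rangle\!\rangle$ is evaluation of meta-terms (limit of reduction by $\beta$, $\mathtt{case}\ \bot\rightsquigarrow\bot$, $\mathtt{case}\ n\ \mathtt{of}(i\Rightarrow E_i)\rightsquigarrow E_n$, case-of-case commutation). A procedure-in-environment $\Gamma\vdash p$ is ${\mathrm{PCF}}^\Omega_k$-denotable if $p=[\![M]\!]_\Gamma$ for a ${\mathrm{PCF}}^\Omega_k$ term $\Gamma\vdash M$ under the standard NSP interpretation ($[\![x]\!]=x^\eta$ with $x^\eta=\lambda\vec z.\mathtt{case}\ x\vec z^{\,\eta}\ \mathtt{of}(i\Rightarrow i)$, $[\![\lambda x.M]\!]=\lambda x.[\![M]\!]$, $[\![MN]\!]=[\![M]\!]\cdot[\![N]\!]$ with $(\lambda x_0\cdots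 x_r.e)\cdot q=\lambda x_1\cdots x_r.\langle\!\langle e[x_0\mapsto q]\rangle\!\rangle$, constants by their standard procedures). $t[i\mapsto e_i]$ replaces each rightward numeral leaf $i$ of $t$ (leaves reached only through $\lambda$-bodies and case branches) by $e_i$. Plugging $\Pi_{\Gamma,Z}(e,\xi)=\bigsqcup_m(\Pi^m)^\circ$ where $\Pi^0=e$, $\Pi^{m+1}=\Pi^m[z\mapsto\xi(z)\ \forall z\in Z]$ and $T^\circ$ replaces each ground subterm $z\vec Q$ ($z\in Z$) by $\bot$. $g$-regular: an environment is $g$-regular if it contains $g$ and otherwise only variables of level $\le k$; a term is $g$-regular if all its free and bound variables are of level $\le k$ except possibly free occurrences of $g$; $\Gamma\vdash t$ is $g$-regular if both are. *)

(* Defs.v *)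
(* Nested sequential procedures (NSPs) as coinductive trees,
   with bound variables as (curried) de Bruijn indices and free variables as
   typed atoms ("locally nameless"); meta-terms; evaluation <<->>; the NSP
   interpretation of PCF^Omega_k; the six generation rules; g-regularity. *)
From Stdlib Require Import List Arith Bool ClassicalDescription Relation_Operators.
Import ListNotations.
Set Implicit Arguments.

(* Arrs [s0; ...; s_{r-1}] is s0 -> ... -> s_{r-1} -> N.              *)
Inductive ty : Type := Arrs : list ty -> ty.
Definition tN : ty := Arrs [].
Definition arrow (s t : ty) : ty := match t with Arrs us => Arrs (s :: us) end.

Fixpoint lv (t : ty) : nat :=
  match t with
  | Arrs l => (fix go (l : list ty) : nat :=
                 match l with [] => 0 | s :: l' => Nat.max (S (lv s)) (go l') end) l
  end.

Definition atom : Type := (nat * ty)%type.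
Definition aty (a : atom) : ty := snd a.

(* Variable occurrences: a free atom, or a bound variable given by a de Bruijn
   index (curried convention: in  MLam [t0;..;t_{r-1}] e  the index 0 refers,
   at the top of e, to x_{r-1}, and index r-1 to x_0). *)
Inductive var : Type := Free (a : atom) | Bnd (n : nat).

(* Meta-terms.  NSPs are the meta-terms without HApp / HExp heads.     *)
CoInductive mproc : Type := MLam : list ty -> mexp -> mproc
with mexp : Type :=
  | MBot : mexp
  | MNum : nat -> mexp
  | MCase : mhead -> (nat -> mexp) -> mexp
with mhead : Type :=
  | HVar : var -> margs -> mhead
  | HApp : mproc -> margs -> mhead
  | HExp : mexp -> mhead
with margs : Type :=
  | ANil : margs
  | ACons : mproc -> margs -> margs.

Definition ptype (p : mproc) : ty := match p with MLam ts _ => Arrs ts end.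

Fixpoint anth (a : margs) (n : nat) : mproc :=
  match a, n with
  | ANil, _ => MLam [] MBot
  | ACons p _, 0 => p
  | ACons _ a', S n' => anth a' n'
  end.

Inductive alen : margs -> nat -> Prop :=
  | alen0 : alen ANil 0
  | alenS p a n : alen a n -> alen (ACons p a) (S n).

Definition upren (m : nat) (rho : nat -> nat) (j : nat) : nat :=
  if j <? m then j else rho (j - m) + m.

Definition ren_v (rho : nat -> nat) (v : var) : var :=
  match v with Free a => Free a | Bnd j => Bnd (rho j) end.

CoFixpoint ren_p (rho : nat -> nat) (p : mproc) : mproc :=
  match p with MLam ts e => MLam ts (ren_e (upren (length ts) rho) e) end
with ren_e (rho : nat -> nat) (e : mexp) : mexp :=
  match e with
  | MBot => MBot
  | MNum n => MNum n
  | MCase h br => MCase (ren_h rho h) (fun i => ren_e rho (br i))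
  end
with ren_h (rho : nat -> nat) (h : mhead) : mhead :=
  match h with
  | HVar v a => HVar (ren_v rho v) (ren_a rho a)
  | HApp p a => HApp (ren_p rho p) (ren_a rho a)
  | HExp e => HExp (ren_e rho e)
  end
with ren_a (rho : nat -> nat) (a : margs) : margs :=
  match a with
  | ANil => ANil
  | ACons p a' => ACons (ren_p rho p) (ren_a rho a')
  end.

Definition shift_p (m : nat) : mproc -> mproc := ren_p (fun j => j + m).
Definition shift_e (m : nat) : mexp -> mexp := ren_e (fun j => j + m).

(* A substitution maps each variable to a variable or to a (meta-)procedure;
   a variable x applied to Qs and replaced by procedure P becomes  P Qs. *)
Inductive sres : Type := SVar (v : var) | SProc (p : mproc).

Definition shift_sres (m : nat) (s : sres) : sres :=
  match s with
  | SVar (Bnd j) => SVar (Bnd (j + m))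
  | SVar (Free a) => SVar (Free a)
  | SProc p => SProc (shift_p m p)
  end.

Definition upsub (m : nat) (sg : var -> sres) (v : var) : sres :=
  match v with
  | Bnd j => if j <? m then SVar (Bnd j) else shift_sres m (sg (Bnd (j - m)))
  | Free a => shift_sres m (sg (Free a))
  end.

CoFixpoint subst_p (sg : var -> sres) (p : mproc) : mproc :=
  match p with MLam ts e => MLam ts (subst_e (upsub (length ts) sg) e) end
with subst_e (sg : var -> sres) (e : mexp) : mexp :=
  match e with
  | MBot => MBot
  | MNum n => MNum n
  | MCase h br => MCase (subst_h sg h) (fun i => subst_e sg (br i))
  end
with subst_h (sg : var -> sres) (h : mhead) : mhead :=
  match h with
  | HVar v a =>
      match sg v with
      | SVar v' => HVar v' (subst_a sg a)
      | SProc q => HApp q (subst_a sg a)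
      end
  | HApp p a => HApp (subst_p sg p) (subst_a sg a)
  | HExp e => HExp (subst_e sg e)
  end
with subst_a (sg : var -> sres) (a : margs) : margs :=
  match a with
  | ANil => ANil
  | ACons p a' => ACons (subst_p sg p) (subst_a sg a')
  end.

Definition beta_sub (r : nat) (a : margs) (v : var) : sres :=
  match v with
  | Bnd j => if j <? r then SProc (anth a (r - 1 - j)) else SVar (Bnd (j - r))
  | Free x => SVar (Free x)
  end.

Inductive hstep : mexp -> mexp -> Prop :=
  | hs_bot br : hstep (MCase (HExp MBot) br) MBot
  | hs_num n br : hstep (MCase (HExp (MNum n)) br) (br n)
  | hs_cc h br' br :
      hstep (MCase (HExp (MCase h br')) br) (MCase h (fun i => MCase (HExp (br' i)) br))
  | hs_beta ts e a br :
      alen a (length ts) ->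
      hstep (MCase (HApp (MLam ts e) a) br)
            (MCase (HExp (subst_e (beta_sub (length ts) a) e)) br).

Definition hsteps : mexp -> mexp -> Prop := clos_refl_trans mexp hstep.

(* Evaluation <<E>> (as a relation: the limit of reduction).  *)
CoInductive evalP : mproc -> mproc -> Prop :=
  | ev_lam ts e e' : evalE e e' -> evalP (MLam ts e) (MLam ts e')
with evalE : mexp -> mexp -> Prop :=
  | ev_num E n : hsteps E (MNum n) -> evalE E (MNum n)
  | ev_case E v a br a' br' :
      hsteps E (MCase (HVar v a) br) -> evalA a a' ->
      (forall i, evalE (br i) (br' i)) -> evalE E (MCase (HVar v a') br')
  | ev_bot E :
      (forall n, ~ hsteps E (MNum n)) ->
      (forall v a br, ~ hsteps E (MCase (HVar v a) br)) -> evalE E MBot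
with evalA : margs -> margs -> Prop :=
  | ev_nil : evalA ANil ANil
  | ev_cons p p' a a' : evalP p p' -> evalA a a' -> evalA (ACons p a) (ACons p' a').

CoInductive bisimP : mproc -> mproc -> Prop :=
  | bs_lam ts e e' : bisimE e e' -> bisimP (MLam ts e) (MLam ts e')
with bisimE : mexp -> mexp -> Prop :=
  | bs_bot : bisimE MBot MBot
  | bs_num n : bisimE (MNum n) (MNum n)
  | bs_case h h' br br' :
      bisimH h h' -> (forall i, bisimE (br i) (br' i)) -> bisimE (MCase h br) (MCase h' br')
with bisimH : mhead -> mhead -> Prop :=
  | bs_var v a a' : bisimA a a' -> bisimH (HVar v a) (HVar v a')
  | bs_app p p' a a' : bisimP p p' -> bisimA a a' -> bisimH (HApp p a) (HApp p' a')
  | bs_exp e e' : bisimE e e' -> bisimH (HExp e) (HExp e')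
with bisimA : margs -> margs -> Prop :=
  | bs_nil : bisimA ANil ANil
  | bs_cons p p' a a' : bisimP p p' -> bisimA a a' -> bisimA (ACons p a) (ACons p' a').

CoInductive mleP : mproc -> mproc -> Prop :=
  | le_lam ts e e' : mleE e e' -> mleP (MLam ts e) (MLam ts e')
with mleE : mexp -> mexp -> Prop :=
  | le_bot e : mleE MBot e
  | le_num n : mleE (MNum n) (MNum n)
  | le_case h h' br br' :
      mleH h h' -> (forall i, mleE (br i) (br' i)) -> mleE (MCase h br) (MCase h' br')
with mleH : mhead -> mhead -> Prop :=
  | le_hbot h : mleH (HExp MBot) h
  | le_var v a a' : mleA a a' -> mleH (HVar v a) (HVar v a')
  | le_app p p' a a' : mleP p p' -> mleA a a' -> mleH (HApp p a) (HApp p' a')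
  | le_exp e e' : mleE e e' -> mleH (HExp e) (HExp e')
with mleA : margs -> margs -> Prop :=
  | le_nil : mleA ANil ANil
  | le_cons p p' a a' : mleP p p' -> mleA a a' -> mleA (ACons p a) (ACons p' a').

Definition is_lub (T : nat -> mexp) (L : mexp) : Prop :=
  (forall m, mleE (T m) L) /\
  (forall U, (forall m, mleE (T m) U) -> mleE L U).

(* Rightward leaf substitution t[i |-> e_i] (only through lambda bodies
   and case branches; e_i are shifted under binders).                  *)
CoFixpoint rsub_e (f : nat -> mexp) (d : nat) (e : mexp) : mexp :=
  match e with
  | MBot => MBot
  | MNum i => shift_e d (f i)
  | MCase h br => MCase h (fun i => rsub_e f d (br i))
  end.

Definition rsub_p (f : nat -> mexp) (d : nat) (p : mproc) : mproc :=
  match p with MLam ts e => MLam ts (rsub_e f (d + length ts) e) end.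

Definition rsub (f : nat -> mexp) (p : mproc) : mproc := rsub_p f 0 p.

Definition ofopt (o : option nat) : mexp :=
  match o with Some n => MNum n | None => MBot end.

(* Plugging  Pi_{Gamma,Z}(e, xi)  for the procedure  \ z xs . e  where
   z : sigma = sigmas -> N, r = |sigmas|.  In e, z has index r and x_i has
   index r-1-i.  xi(z) = \xs.e, xi(x_i) = q_i.                          *)
Definition plug_sub (sigmas : list ty) (e : mexp) (qs : margs) (v : var) : sres :=
  let r := length sigmas in
  match v with
  | Bnd j =>
      if j <? r then SProc (shift_p (S r) (anth qs (r - 1 - j)))
      else if j =? r then SProc (shift_p r (MLam sigmas e))
      else SVar (Bnd j)
  | Free a => SVar (Free a)
  end.

Definition Pi_iter (sigmas : list ty) (e : mexp) (qs : margs) (m : nat) : mexp :=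
  Nat.iter m (subst_e (plug_sub sigmas e qs)) e.

(* T° : replace every ground subterm  z Qs  (z in Z = {z, x_0..x_{r-1}},
   i.e. indices d..d+r at binding depth d) by bot.                    *)
CoFixpoint circ_p (r d : nat) (p : mproc) : mproc :=
  match p with MLam ts e => MLam ts (circ_e r (d + length ts) e) end
with circ_e (r d : nat) (e : mexp) : mexp :=
  match e with
  | MBot => MBot
  | MNum n => MNum n
  | MCase h br => MCase (circ_h r d h) (fun i => circ_e r d (br i))
  end
with circ_h (r d : nat) (h : mhead) : mhead :=
  match h with
  | HVar (Bnd j) a =>
      if (d <=? j) && (j <=? d + r) then HExp MBot else HVar (Bnd j) (circ_a r d a)
  | HVar (Free x) a => HVar (Free x) (circ_a r d a)
  | HApp p a => HApp (circ_p r d p) (circ_a r d a)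
  | HExp e => HExp (circ_e r d e)
  end
with circ_a (r d : nat) (a : margs) : margs :=
  match a with
  | ANil => ANil
  | ACons p a' => ACons (circ_p r d p) (circ_a r d a')
  end.

Definition Plug (sigmas : list ty) (e : mexp) (qs : margs) (P : mexp) : Prop :=
  is_lub (fun m => circ_e (length sigmas) 0 (Pi_iter sigmas e qs m)) P.

Definition abs_sub (n : nat) (x : atom) (v : var) : sres :=
  match v with
  | Free a => if excluded_middle_informative (a = x) then SVar (Bnd n) else SVar (Free a)
  | Bnd j => if j <? n then SVar (Bnd j) else SVar (Bnd (S j))
  end.

Definition abs (x : atom) (p : mproc) : mproc :=
  match p with MLam ts e => MLam (aty x :: ts) (subst_e (abs_sub (length ts) x) e) end.

Definition app_sub (n : nat) (q : mproc) (v : var) : sres :=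
  match v with
  | Bnd j => if j <? n then SVar (Bnd j)
             else if j =? n then SProc (shift_p n q) else SVar (Bnd (j - 1))
  | Free a => SVar (Free a)
  end.

Inductive app_rel : mproc -> mproc -> mproc -> Prop :=
  | app_intro t0 ts e q e' :
      evalE (subst_e (app_sub (length ts) q) e) e' ->
      app_rel (MLam (t0 :: ts) e) q (MLam ts e').

(* eta-expansion of a variable of type tau; hv m is the head variable seen
   under m extra binders.  x^eta = \zs. case x zs^eta of (i => i).       *)
Fixpoint eta (tau : ty) (hv : nat -> var) {struct tau} : mproc :=
  match tau with
  | Arrs us =>
      let r := length us in
      MLam us (MCase (HVar (hv r)
                 ((fix mk (l : list ty) (j : nat) : margs :=
                     match l with
                     | [] => ANil
                     | u :: l' => ACons (eta u (fun m => Bnd (r - 1 - j + m))) (mk l' (S j))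
                     end) us 0))
               (fun i => MNum i))
  end.

Definition eta_atom (x : atom) : mproc := eta (aty x) (fun _ => Free x).

(* arguments z_0^eta .. z_{r-1}^eta for the r binders just introduced *)
Fixpoint eta_args (r : nat) (l : list ty) (j : nat) : margs :=
  match l with
  | [] => ANil
  | u :: l' => ACons (eta u (fun m => Bnd (r - 1 - j + m))) (eta_args r l' (S j))
  end.

Definition num_proc (n : nat) : mproc := MLam [] (MNum n).
Definition suc_proc : mproc :=
  MLam [tN] (MCase (HVar (Bnd 0) ANil) (fun i => MNum (S i))).
Definition pre_proc : mproc :=
  MLam [tN] (MCase (HVar (Bnd 0) ANil) (fun i => MNum (Nat.pred i))).
Definition ifzero_proc : mproc :=
  MLam [tN; tN; tN]
    (MCase (HVar (Bnd 2) ANil)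
       (fun i => match i with
                 | 0 => MCase (HVar (Bnd 1) ANil) (fun j => MNum j)
                 | S _ => MCase (HVar (Bnd 0) ANil) (fun j => MNum j)
                 end)).
Definition oracle_proc (f : nat -> option nat) : mproc :=
  MLam [tN] (MCase (HVar (Bnd 0) ANil) (fun i => ofopt (f i))).

(* Y_sigma = \ f zs. case f (Y f) zs^eta of (i => i), unfolded:
   Yq fidx = \ys. case f (Yq ..) ys^eta of (i => i), f having index fidx. *)
CoFixpoint Yq (sigmas : list ty) (fidx : nat) : mproc :=
  MLam sigmas
    (MCase (HVar (Bnd (fidx + length sigmas))
              (ACons (Yq sigmas (fidx + length sigmas))
                     (eta_args (length sigmas) sigmas 0)))
           (fun i => MNum i)).

Definition Y_proc (sigma : ty) : mproc :=
  match sigma with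
  | Arrs sigmas =>
      let r := length sigmas in
      MLam (arrow sigma sigma :: sigmas)
        (MCase (HVar (Bnd r) (ACons (Yq sigmas r) (eta_args r sigmas 0)))
               (fun i => MNum i))
  end.

Inductive pcf : Type :=
  | PVar (x : atom)
  | PLam (x : atom) (M : pcf)
  | PApp (M N : pcf)
  | PNum (n : nat)
  | PSuc | PPre | PIfz
  | POracle (f : nat -> option nat)
  | PY (sigma : ty).

(* den k G M tau p :  G |- M : tau  is a PCF^Omega_k term and [[M]]_G = p *)
Inductive den (k : nat) : list atom -> pcf -> ty -> mproc -> Prop :=
  | den_var G x : In x G -> den k G (PVar x) (aty x) (eta_atom x)
  | den_lam G x M tau p :
      ~ In x G -> den k (x :: G) M tau p -> den k G (PLam x M) (arrow (aty x) tau) (abs x p)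
  | den_app G M N s tau p q r :
      den k G M (arrow s tau) p -> den k G N s q -> app_rel p q r -> den k G (PApp M N) tau r
  | den_num G n : den k G (PNum n) tN (num_proc n)
  | den_suc G : den k G PSuc (arrow tN tN) suc_proc
  | den_pre G : den k G PPre (arrow tN tN) pre_proc
  | den_ifz G : den k G PIfz (arrow tN (arrow tN (arrow tN tN))) ifzero_proc
  | den_oracle G f : den k G (POracle f) (arrow tN tN) (oracle_proc f)
  | den_Y G sigma : lv sigma <= k -> den k G (PY sigma) (arrow (arrow sigma sigma) sigma) (Y_proc sigma).

Definition denotable (k : nat) (G : list atom) (t : mproc) : Prop :=
  exists M tau p, den k G M tau p /\ bisimP p t.

(* The six generation rules (derivations are objects, in Type).        *)
Inductive Gen (k : nat) : list atom -> mproc -> Type :=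
  | Gen1 G x qs sigmas p :
      In x G -> aty x = Arrs sigmas -> GenL k G qs sigmas ->
      bisimP (MLam [] (MCase (HVar (Free x) qs) (fun j => MNum j))) p -> Gen k G p
  | Gen2 G x p p' :
      ~ In x G -> Gen k (x :: G) p -> bisimP (abs x p) p' -> Gen k G p'
  | Gen3 G n p :
      bisimP (MLam [] (MNum n)) p -> Gen k G p
  | Gen4 G p (f : nat -> option nat) p' :
      Gen k G p -> bisimP (rsub (fun i => ofopt (f i)) p) p' -> Gen k G p'
  | Gen5 G p d e p' :
      Gen k G p -> Gen k G (MLam [] d) -> Gen k G (MLam [] e) ->
      bisimP (rsub (fun i => match i with 0 => d | S _ => e end) p) p' -> Gen k G p'
  | Gen6 G sigmas e qs P t p' :
      lv (Arrs sigmas) <= k ->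
      Gen k G (MLam (Arrs sigmas :: sigmas) e) -> GenL k G qs sigmas ->
      Plug sigmas e qs P -> evalE P t -> bisimP (MLam [] t) p' -> Gen k G p'
with GenL (k : nat) : list atom -> margs -> list ty -> Type :=
  | GenL0 G : GenL k G ANil []
  | GenL1 G q qs s sigmas :
      Gen k G q -> ptype q = s -> GenL k G qs sigmas -> GenL k G (ACons q qs) (s :: sigmas).

Fixpoint allG (k : nat) (P : list atom -> mproc -> Prop) (G : list atom) (p : mproc)
  (D : Gen k G p) {struct D} : Prop :=
  P G p /\
  match D with
  | @Gen1 _ _ _ _ _ _ _ _ L _ => allL P L
  | @Gen2 _ _ _ _ _ _ D' _ => allG P D'
  | @Gen3 _ _ _ _ _ => True
  | @Gen4 _ _ _ _ _ D' _ => allG P D'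
  | @Gen5 _ _ _ _ _ _ D1 D2 D3 _ => allG P D1 /\ allG P D2 /\ allG P D3
  | @Gen6 _ _ _ _ _ _ _ _ _ D' L _ _ _ => allG P D' /\ allL P L
  end
with allL (k : nat) (P : list atom -> mproc -> Prop) (G : list atom) (qs : margs)
  (sigmas : list ty) (L : GenL k G qs sigmas) {struct L} : Prop :=
  match L with
  | @GenL0 _ _ => True
  | @GenL1 _ _ _ _ _ _ D _ L' => allG P D /\ allL P L'
  end.

(* occurrences (reached by a finite path) of binder lists / variables *)
Inductive occP (Pl : list ty -> Prop) (Pv : var -> Prop) : mproc -> Prop :=
  | oc_lam ts e : Pl ts -> occP Pl Pv (MLam ts e)
  | oc_body ts e : occE Pl Pv e -> occP Pl Pv (MLam ts e)
with occE (Pl : list ty -> Prop) (Pv : var -> Prop) : mexp -> Prop :=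
  | oc_head h br : occH Pl Pv h -> occE Pl Pv (MCase h br)
  | oc_br h br i : occE Pl Pv (br i) -> occE Pl Pv (MCase h br)
with occH (Pl : list ty -> Prop) (Pv : var -> Prop) : mhead -> Prop :=
  | oc_var v a : Pv v -> occH Pl Pv (HVar v a)
  | oc_vargs v a : occA Pl Pv a -> occH Pl Pv (HVar v a)
  | oc_app p a : occP Pl Pv p -> occH Pl Pv (HApp p a)
  | oc_appargs p a : occA Pl Pv a -> occH Pl Pv (HApp p a)
  | oc_exp e : occE Pl Pv e -> occH Pl Pv (HExp e)
with occA (Pl : list ty -> Prop) (Pv : var -> Prop) : margs -> Prop :=
  | oc_hd p a : occP Pl Pv p -> occA Pl Pv (ACons p a)
  | oc_tl p a : occA Pl Pv a -> occA Pl Pv (ACons p a).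

Definition bound_var_type (tau : ty) (p : mproc) : Prop :=
  occP (fun ts => In tau ts) (fun _ => False) p.
Definition free_var (x : atom) (p : mproc) : Prop :=
  occP (fun _ => False) (fun v => v = Free x) p.

Definition env_regular (k : nat) (g : atom) (G : list atom) : Prop :=
  In g G /\ forall a, In a G -> a <> g -> lv (aty a) <= k.

Definition term_regular (k : nat) (g : atom) (p : mproc) : Prop :=
  (forall tau, bound_var_type tau p -> lv tau <= k) /\
  (forall a, free_var a p -> a = g \/ lv (aty a) <= k).

Definition g_regular (k : nat) (g : atom) (G : list atom) (p : mproc) : Prop :=
  env_regular k g G /\ term_regular k g p.

(* Main.v *)
Require Import Defs.
From Stdlib Require Import List Arith Bool ClassicalDescription Classical Relation_Operators Lia.
Import ListNotations.

Definition frobP p := match p with MLam ts e => MLam ts e end.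
Definition frobE e := match e with MBot => MBot | MNum n => MNum n | MCase h br => MCase h br end.
Definition frobH h := match h with HVar v a => HVar v a | HApp p a => HApp p a | HExp e => HExp e end.
Definition frobA a := match a with ANil => ANil | ACons p a => ACons p a end.
Lemma frobP_eq p : p = frobP p. Proof. destruct p; reflexivity. Qed.
Lemma frobE_eq e : e = frobE e. Proof. destruct e; reflexivity. Qed.
Lemma frobH_eq h : h = frobH h. Proof. destruct h; reflexivity. Qed.
Lemma frobA_eq a : a = frobA a. Proof. destruct a; reflexivity. Qed.

Ltac unf := match goal with |- ?L = _ =>
  first [ transitivity (frobP L); [apply frobP_eq|reflexivity]
        | transitivity (frobE L); [apply frobE_eq|reflexivity]
        | transitivity (frobH L); [apply frobH_eq|reflexivity]
        | transitivity (frobA L); [apply frobA_eq|reflexivity] ] end.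

Lemma ren_p_eq rho ts e : ren_p rho (MLam ts e) = MLam ts (ren_e (upren (length ts) rho) e). Proof. unf. Qed.
Lemma ren_e_bot rho : ren_e rho MBot = MBot. Proof. unf. Qed.
Lemma ren_e_num rho n : ren_e rho (MNum n) = MNum n. Proof. unf. Qed.
Lemma ren_e_case rho h br : ren_e rho (MCase h br) = MCase (ren_h rho h) (fun i => ren_e rho (br i)). Proof. unf. Qed.
Lemma ren_h_var rho v a : ren_h rho (HVar v a) = HVar (ren_v rho v) (ren_a rho a). Proof. unf. Qed.
Lemma ren_h_app rho p a : ren_h rho (HApp p a) = HApp (ren_p rho p) (ren_a rho a). Proof. unf. Qed.
Lemma ren_h_exp rho e : ren_h rho (HExp e) = HExp (ren_e rho e). Proof. unf. Qed.
Lemma ren_a_nil rho : ren_a rho ANil = ANil. Proof. unf. Qed.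
Lemma ren_a_cons rho p a : ren_a rho (ACons p a) = ACons (ren_p rho p) (ren_a rho a). Proof. unf. Qed.

Scheme occP_mut := Minimality for occP Sort Prop
with occE_mut := Minimality for occE Sort Prop
with occH_mut := Minimality for occH Sort Prop
with occA_mut := Minimality for occA Sort Prop.
Combined Scheme occ_mut from occP_mut, occE_mut, occH_mut, occA_mut.

Ltac rinv H := 
  repeat match type of H with
  | _ = ren_p _ ?p => destruct p; rewrite ren_p_eq in H
  | _ = ren_e _ ?e => destruct e; [rewrite ren_e_bot in H|rewrite ren_e_num in H|rewrite ren_e_case in H]
  | _ = ren_h _ ?h => destruct h; [rewrite ren_h_var in H|rewrite ren_h_app in H|rewrite ren_h_exp in H]
  | _ = ren_a _ ?a => destruct a; [rewrite ren_a_nil in H|rewrite ren_a_cons in H]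
  end; try discriminate H; inversion H; subst; clear H.

Lemma occ_ren Pl Pv (HB : forall j, ~ Pv (Bnd j)) :
 (forall x, occP Pl Pv x -> forall rho p, x = ren_p rho p -> occP Pl Pv p) /\
 (forall x, occE Pl Pv x -> forall rho e, x = ren_e rho e -> occE Pl Pv e) /\
 (forall x, occH Pl Pv x -> forall rho h, x = ren_h rho h -> occH Pl Pv h) /\
 (forall x, occA Pl Pv x -> forall rho a, x = ren_a rho a -> occA Pl Pv a).
Proof.
  apply occ_mut; intros;
  match goal with H : _ = _ |- _ => rinv H end.
  all: try solve [econstructor; eauto].
  match goal with v : var |- _ => destruct v; simpl in *; [constructor; auto | exfalso; eapply HB; eauto] end.
Qed.

Lemma subst_p_eq sg ts e : subst_p sg (MLam ts e) = MLam ts (subst_e (upsub (length ts) sg) e). Proof. unf. Qed.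
Lemma subst_e_bot sg : subst_e sg MBot = MBot. Proof. unf. Qed.
Lemma subst_e_num sg n : subst_e sg (MNum n) = MNum n. Proof. unf. Qed.
Lemma subst_e_case sg h br : subst_e sg (MCase h br) = MCase (subst_h sg h) (fun i => subst_e sg (br i)). Proof. unf. Qed.
Lemma subst_h_var sg v a : subst_h sg (HVar v a) =
  match sg v with SVar v' => HVar v' (subst_a sg a) | SProc q => HApp q (subst_a sg a) end.
Proof. transitivity (frobH (subst_h sg (HVar v a))); [apply frobH_eq|]. simpl. destruct (sg v); reflexivity. Qed.
Lemma subst_h_app sg p a : subst_h sg (HApp p a) = HApp (subst_p sg p) (subst_a sg a). Proof. unf. Qed.
Lemma subst_h_exp sg e : subst_h sg (HExp e) = HExp (subst_e sg e). Proof. unf. Qed.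
Lemma subst_a_nil sg : subst_a sg ANil = ANil. Proof. unf. Qed.
Lemma subst_a_cons sg p a : subst_a sg (ACons p a) = ACons (subst_p sg p) (subst_a sg a). Proof. unf. Qed.

Definition sgood Pl Pv (sg : var -> sres) : Prop :=
  forall v, match sg v with SVar v' => Pv v' -> Pv v | SProc p => ~ occP Pl Pv p end.

Lemma sgood_up Pl Pv (HB : forall j, ~ Pv (Bnd j)) sg m : sgood Pl Pv sg -> sgood Pl Pv (upsub m sg).
Proof.
  intros H v. destruct v as [a|j]; simpl.
  - specialize (H (Free a)). destruct (sg (Free a)) as [[b|i]|p]; simpl; auto.
    + intros Hc; exfalso; eapply HB; eauto.
    + intros Hc. apply H. unfold shift_p in Hc. eapply (proj1 (occ_ren _ _ HB)); eauto.
  - destruct (j <? m); simpl.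
    + intros Hc; exfalso; eapply HB; eauto.
    + specialize (H (Bnd (j - m))). destruct (sg (Bnd (j-m))) as [[b|i]|p]; simpl; auto.
      * intros Hc. exfalso. eapply HB; eauto.
      * intros Hc; exfalso; eapply HB; eauto.
      * intros Hc. apply H. unfold shift_p in Hc. eapply (proj1 (occ_ren _ _ HB)); eauto.
Qed.

Ltac sinv H := 
  repeat match type of H with
  | _ = subst_p _ ?p => destruct p; rewrite subst_p_eq in H
  | _ = subst_e _ ?e => destruct e; [rewrite subst_e_bot in H|rewrite subst_e_num in H|rewrite subst_e_case in H]
  | _ = subst_h ?sg ?h => let E := fresh "E" in destruct h;
       [rewrite subst_h_var in H; match type of H with _ = match ?s with _ => _ end => destruct s eqn:E end
       |rewrite subst_h_app in H|rewrite subst_h_exp in H]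
  | _ = subst_a _ ?a => destruct a; [rewrite subst_a_nil in H|rewrite subst_a_cons in H]
  end; try discriminate H; inversion H; subst; clear H.

Lemma occ_subst Pl Pv (HB : forall j, ~ Pv (Bnd j)) :
 (forall x, occP Pl Pv x -> forall sg p, sgood Pl Pv sg -> x = subst_p sg p -> occP Pl Pv p) /\
 (forall x, occE Pl Pv x -> forall sg e, sgood Pl Pv sg -> x = subst_e sg e -> occE Pl Pv e) /\
 (forall x, occH Pl Pv x -> forall sg h, sgood Pl Pv sg -> x = subst_h sg h -> occH Pl Pv h) /\
 (forall x, occA Pl Pv x -> forall sg a, sgood Pl Pv sg -> x = subst_a sg a -> occA Pl Pv a).
Proof.
  apply occ_mut; intros;
  match goal with H : _ = _ |- _ => sinv H end.
  all: try solve [econstructor; eauto using sgood_up].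
  all: match goal with H : sgood _ _ ?sg, E : ?sg ?v = _ |- _ => specialize (H v); rewrite E in H end.
  all: try solve [constructor; auto].
  all: exfalso; auto.
Qed.

Lemma rsub_e_bot f d : rsub_e f d MBot = MBot. Proof. unf. Qed.
Lemma rsub_e_num f d i : rsub_e f d (MNum i) = shift_e d (f i).
Proof. transitivity (frobE (rsub_e f d (MNum i))); [apply frobE_eq|]. simpl. symmetry; apply frobE_eq. Qed.
Lemma rsub_e_case f d h br : rsub_e f d (MCase h br) = MCase h (fun i => rsub_e f d (br i)). Proof. unf. Qed.

Lemma occ_rsub Pl Pv (HB : forall j, ~ Pv (Bnd j)) f :
  forall x, occE Pl Pv x -> forall d e, x = rsub_e f d e -> occE Pl Pv e \/ exists i, occE Pl Pv (f i).
Proof.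
  intros x Hx. induction Hx; intros d e0 Heq.
  - destruct e0; [rewrite rsub_e_bot in Heq; discriminate| rewrite rsub_e_num in Heq | rewrite rsub_e_case in Heq].
    + right. exists n. unfold shift_e in Heq. eapply (proj1 (proj2 (occ_ren _ _ HB))); [|exact Heq]. constructor; auto.
    + inversion Heq; subst. left. constructor; auto.
  - destruct e0; [rewrite rsub_e_bot in Heq; discriminate| rewrite rsub_e_num in Heq | rewrite rsub_e_case in Heq].
    + right. exists n. unfold shift_e in Heq. eapply (proj1 (proj2 (occ_ren _ _ HB))); [|exact Heq]. eapply oc_br; eauto.
    + inversion Heq; subst. destruct (IHHx d (m0 i) eq_refl) as [H|H]; auto. left. eapply oc_br; eauto.
Qed.

Lemma occ_rsub_p Pl Pv (HB : forall j, ~ Pv (Bnd j)) f p :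
  occP Pl Pv (rsub f p) -> occP Pl Pv p \/ exists i, occE Pl Pv (f i).
Proof.
  destruct p as [ts e]. unfold rsub; simpl. intros H; inversion H; subst.
  - left; constructor; auto.
  - destruct (occ_rsub Pl Pv HB f _ H1 _ _ eq_refl) as [H2|H2]; auto. left; apply oc_body; auto.
Qed.

Lemma circ_p_eq r d ts e : circ_p r d (MLam ts e) = MLam ts (circ_e r (d + length ts) e). Proof. unf. Qed.
Lemma circ_e_bot r d : circ_e r d MBot = MBot. Proof. unf. Qed.
Lemma circ_e_num r d n : circ_e r d (MNum n) = MNum n. Proof. unf. Qed.
Lemma circ_e_case r d h br : circ_e r d (MCase h br) = MCase (circ_h r d h) (fun i => circ_e r d (br i)). Proof. unf. Qed.
Lemma circ_h_bnd r d j a : circ_h r d (HVar (Bnd j) a) =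
  if (d <=? j) && (j <=? d + r) then HExp MBot else HVar (Bnd j) (circ_a r d a).
Proof. transitivity (frobH (circ_h r d (HVar (Bnd j) a))); [apply frobH_eq|]. simpl.
  destruct ((d <=? j) && (j <=? d + r)); reflexivity. Qed.
Lemma circ_h_free r d x a : circ_h r d (HVar (Free x) a) = HVar (Free x) (circ_a r d a). Proof. unf. Qed.
Lemma circ_h_app r d p a : circ_h r d (HApp p a) = HApp (circ_p r d p) (circ_a r d a). Proof. unf. Qed.
Lemma circ_h_exp r d e : circ_h r d (HExp e) = HExp (circ_e r d e). Proof. unf. Qed.
Lemma circ_a_nil r d : circ_a r d ANil = ANil. Proof. unf. Qed.
Lemma circ_a_cons r d p a : circ_a r d (ACons p a) = ACons (circ_p r d p) (circ_a r d a). Proof. unf. Qed.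

Ltac cinv H :=
  repeat match type of H with
  | _ = circ_p _ _ ?p => destruct p; rewrite circ_p_eq in H
  | _ = circ_e _ _ ?e => destruct e; [rewrite circ_e_bot in H|rewrite circ_e_num in H|rewrite circ_e_case in H]
  | _ = circ_h _ _ ?h => destruct h as [[?|?] ?| ? ?|?];
       [rewrite circ_h_free in H
       |rewrite circ_h_bnd in H; match type of H with _ = if ?b then _ else _ => destruct b end
       |rewrite circ_h_app in H|rewrite circ_h_exp in H]
  | _ = circ_a _ _ ?a => destruct a; [rewrite circ_a_nil in H|rewrite circ_a_cons in H]
  end; try discriminate H; inversion H; subst; clear H.

Lemma occ_circ Pl Pv :
 (forall x, occP Pl Pv x -> forall r d p, x = circ_p r d p -> occP Pl Pv p) /\
 (forall x, occE Pl Pv x -> forall r d e, x = circ_e r d e -> occE Pl Pv e) /\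
 (forall x, occH Pl Pv x -> forall r d h, x = circ_h r d h -> occH Pl Pv h) /\
 (forall x, occA Pl Pv x -> forall r d a, x = circ_a r d a -> occA Pl Pv a).
Proof.
  apply occ_mut; intros;
  match goal with H : _ = _ |- _ => cinv H end.
  all: try solve [econstructor; eauto].
  all: try solve [match goal with H: occE _ _ MBot |- _ => inversion H end].
  all: try solve [match goal with H: occA _ _ ANil |- _ => inversion H end].
Qed.

Scheme occ_dummy := Minimality for occE Sort Prop.
Lemma occ_bisim Pl Pv :
 (forall x, occP Pl Pv x -> forall p, bisimP p x -> occP Pl Pv p) /\
 (forall x, occE Pl Pv x -> forall e, bisimE e x -> occE Pl Pv e) /\
 (forall x, occH Pl Pv x -> forall h, bisimH h x -> occH Pl Pv h) /\
 (forall x, occA Pl Pv x -> forall a, bisimA a x -> occA Pl Pv a).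
Proof.
  apply occ_mut; intros;
  match goal with H : bisimP _ _ |- _ => inversion H | H : bisimE _ _ |- _ => inversion H
   | H : bisimH _ _ |- _ => inversion H | H : bisimA _ _ |- _ => inversion H end; subst.
  all: solve [econstructor; eauto].
Qed.

Lemma ptype_bisim p p' : bisimP p p' -> ptype p = ptype p'.
Proof. intros H; inversion H; reflexivity. Qed.

Lemma occ_anth Pl Pv : forall n a, occP Pl Pv (anth a n) -> occA Pl Pv a \/ Pl [].
Proof.
  induction n; intros a H; destruct a; simpl in H.
  - inversion H; subst; auto. inversion H1.
  - left; constructor; auto.
  - inversion H; subst; auto. inversion H1.
  - destruct (IHn a H); auto. left; apply oc_tl; auto.
Qed.

Lemma hstep_clean Pl Pv (HB : forall j, ~ Pv (Bnd j)) (H0 : ~ Pl []) E E' :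
  hstep E E' -> ~ occE Pl Pv E -> ~ occE Pl Pv E'.
Proof.
  intros Hs HE HE'. apply HE. destruct Hs.
  - inversion HE'.
  - eapply oc_br; eauto.
  - inversion HE'; subst.
    + apply oc_head, oc_exp, oc_head; auto.
    + match goal with H : occE _ _ (MCase (HExp _) _) |- _ => inversion H; subst end.
      * match goal with H : occH _ _ (HExp _) |- _ => inversion H; subst end.
        apply oc_head, oc_exp; eapply oc_br; eauto.
      * eapply oc_br; eauto.
  - inversion HE'; subst.
    + match goal with H : occH _ _ (HExp _) |- _ => inversion H; subst end.
      destruct (classic (occA Pl Pv a)) as [Ha|Ha].
      * apply oc_head, oc_appargs; auto.
      * apply oc_head, oc_app, oc_body.
        eapply (proj1 (proj2 (occ_subst _ _ HB))); [eassumption| |reflexivity].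
        intros v. destruct v as [x|j]; simpl; auto.
        destruct (j <? length ts); simpl; auto.
        intros Hc. destruct (occ_anth _ _ _ _ Hc); auto. intros Hc; exfalso; eapply HB; eauto.
    + eapply oc_br; eauto.
Qed.

Lemma hsteps_clean Pl Pv (HB : forall j, ~ Pv (Bnd j)) (H0 : ~ Pl []) E E' :
  hsteps E E' -> ~ occE Pl Pv E -> ~ occE Pl Pv E'.
Proof.
  induction 1; auto. apply hstep_clean; auto.
Qed.

Lemma occ_eval Pl Pv (HB : forall j, ~ Pv (Bnd j)) (H0 : ~ Pl []) :
 (forall x, occP Pl Pv x -> forall p, evalP p x -> ~ occP Pl Pv p -> False) /\
 (forall x, occE Pl Pv x -> forall E, evalE E x -> ~ occE Pl Pv E -> False) /\
 (forall x, occH Pl Pv x -> forall v a' a, x = HVar v a' -> evalA a a' -> ~ occH Pl Pv (HVar v a) -> False) /\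
 (forall x, occA Pl Pv x -> forall a, evalA a x -> ~ occA Pl Pv a -> False).
Proof.
  apply occ_mut.
  - intros ts e Hl p Hev Hn. inversion Hev; subst. apply Hn; constructor; auto.
  - intros ts e Ho IH p Hev Hn. inversion Hev; subst. eapply IH; eauto. intros Hc; apply Hn; apply oc_body; auto.
  - intros h br Ho IH E Hev Hn. inversion Hev; subst.
    match goal with Hs : hsteps _ _ |- _ => pose proof (hsteps_clean _ _ HB H0 _ _ Hs Hn) as HC end.
    eapply IH; eauto. intros Hc; apply HC; apply oc_head; auto.
  - intros h br i Ho IH E Hev Hn. inversion Hev; subst.
    match goal with Hs : hsteps _ _ |- _ => pose proof (hsteps_clean _ _ HB H0 _ _ Hs Hn) as HC end.
    eapply IH; eauto. intros Hc; apply HC; eapply oc_br; eauto.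
  - intros v a Hv v0 a' a0 Heq Hev Hn. inversion Heq; subst. apply Hn; constructor; auto.
  - intros v a Ho IH v0 a' a0 Heq Hev Hn. inversion Heq; subst. eapply IH; eauto. intros Hc; apply Hn; apply oc_vargs; auto.
  - intros; discriminate.
  - intros; discriminate.
  - intros; discriminate.
  - intros p a Ho IH a0 Hev Hn. inversion Hev; subst. eapply IH; eauto. intros Hc; apply Hn; apply oc_hd; auto.
  - intros p a Ho IH a0 Hev Hn. inversion Hev; subst. eapply IH; eauto. intros Hc; apply Hn; apply oc_tl; auto.
Qed.

Lemma occ_mle Pl Pv :
 (forall x, occP Pl Pv x -> forall y, mleP x y -> occP Pl Pv y) /\
 (forall x, occE Pl Pv x -> forall y, mleE x y -> occE Pl Pv y) /\
 (forall x, occH Pl Pv x -> forall y, mleH x y -> occH Pl Pv y) /\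
 (forall x, occA Pl Pv x -> forall y, mleA x y -> occA Pl Pv y).
Proof.
  apply occ_mut; intros;
  match goal with H : mleP _ _ |- _ => inversion H | H : mleE _ _ |- _ => inversion H
   | H : mleH _ _ |- _ => inversion H | H : mleA _ _ |- _ => inversion H end; subst.
  all: try solve [econstructor; eauto].
  all: try solve [match goal with H: occE _ _ MBot |- _ => inversion H end].
Qed.

Definition pbad (Pl : list ty -> Prop) (p : mproc) : Prop := match p with MLam ts _ => Pl ts end.
Inductive abad (Pl : list ty -> Prop) : margs -> Prop :=
  | ab_hd p a : pbad Pl p -> abad Pl (ACons p a)
  | ab_tl p a : abad Pl a -> abad Pl (ACons p a).
Definition hbad Pl (Pv : var -> Prop) (h : mhead) : Prop :=
  match h with HVar v a => Pv v \/ abad Pl a | HApp p a => pbad Pl p \/ abad Pl a | HExp _ => False end.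

CoFixpoint prune_p Pl Pv (p : mproc) : mproc :=
  match p with MLam ts e => MLam ts (prune_e Pl Pv e) end
with prune_e Pl Pv (e : mexp) : mexp :=
  match e with
  | MBot => MBot
  | MNum n => MNum n
  | MCase h br => MCase (prune_h Pl Pv h) (fun i => prune_e Pl Pv (br i))
  end
with prune_h Pl Pv (h : mhead) : mhead :=
  if excluded_middle_informative (hbad Pl Pv h) then HExp MBot else
  match h with
  | HVar v a => HVar v (prune_a Pl Pv a)
  | HApp p a => HApp (prune_p Pl Pv p) (prune_a Pl Pv a)
  | HExp e => HExp (prune_e Pl Pv e)
  end
with prune_a Pl Pv (a : margs) : margs :=
  match a with
  | ANil => ANil
  | ACons p a' => ACons (prune_p Pl Pv p) (prune_a Pl Pv a')
  end.

Lemma prune_p_eq Pl Pv ts e : prune_p Pl Pv (MLam ts e) = MLam ts (prune_e Pl Pv e). Proof. unf. Qed.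
Lemma prune_e_bot Pl Pv : prune_e Pl Pv MBot = MBot. Proof. unf. Qed.
Lemma prune_e_num Pl Pv n : prune_e Pl Pv (MNum n) = MNum n. Proof. unf. Qed.
Lemma prune_e_case Pl Pv h br : prune_e Pl Pv (MCase h br) = MCase (prune_h Pl Pv h) (fun i => prune_e Pl Pv (br i)). Proof. unf. Qed.
Lemma prune_h_bad Pl Pv h : hbad Pl Pv h -> prune_h Pl Pv h = HExp MBot.
Proof. intros H. transitivity (frobH (prune_h Pl Pv h)); [apply frobH_eq|]. simpl.
  destruct (excluded_middle_informative (hbad Pl Pv h)); [reflexivity|contradiction]. Qed.
Lemma prune_h_var Pl Pv v a : ~ hbad Pl Pv (HVar v a) -> prune_h Pl Pv (HVar v a) = HVar v (prune_a Pl Pv a).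
Proof. intros H. transitivity (frobH (prune_h Pl Pv (HVar v a))); [apply frobH_eq|]. simpl.
  destruct (excluded_middle_informative _); [contradiction|reflexivity]. Qed.
Lemma prune_h_app Pl Pv p a : ~ hbad Pl Pv (HApp p a) -> prune_h Pl Pv (HApp p a) = HApp (prune_p Pl Pv p) (prune_a Pl Pv a).
Proof. intros H. transitivity (frobH (prune_h Pl Pv (HApp p a))); [apply frobH_eq|]. simpl.
  destruct (excluded_middle_informative _); [contradiction|reflexivity]. Qed.
Lemma prune_h_exp Pl Pv e : prune_h Pl Pv (HExp e) = HExp (prune_e Pl Pv e).
Proof. transitivity (frobH (prune_h Pl Pv (HExp e))); [apply frobH_eq|]. simpl.
  destruct (excluded_middle_informative _) as [f|]; [destruct f|reflexivity]. Qed.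
Lemma prune_a_nil Pl Pv : prune_a Pl Pv ANil = ANil. Proof. unf. Qed.
Lemma prune_a_cons Pl Pv p a : prune_a Pl Pv (ACons p a) = ACons (prune_p Pl Pv p) (prune_a Pl Pv a). Proof. unf. Qed.

Lemma abad_mle Pl a : abad Pl a -> forall a', mleA a' a -> abad Pl a'.
Proof.
  induction 1; intros a' Hm; inversion Hm; subst.
  - apply ab_hd. match goal with H : mleP _ _ |- _ => inversion H; subst end. auto.
  - apply ab_tl; auto.
Qed.

Lemma abad_occ Pl Pv a : abad Pl a -> occA Pl Pv a.
Proof. induction 1. - destruct p; apply oc_hd, oc_lam; auto. - apply oc_tl; auto. Qed.

Lemma up_P Pl Pv : forall x y, mleP x y -> ~ occP Pl Pv x -> mleP x (prune_p Pl Pv y)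
with up_E Pl Pv : forall x y, mleE x y -> ~ occE Pl Pv x -> mleE x (prune_e Pl Pv y)
with up_H Pl Pv : forall x y, mleH x y -> ~ occH Pl Pv x -> mleH x (prune_h Pl Pv y)
with up_A Pl Pv : forall x y, mleA x y -> ~ occA Pl Pv x -> mleA x (prune_a Pl Pv y).
Proof.
  - intros x y H Hn. destruct H. rewrite prune_p_eq. constructor.
    apply up_E; auto. intros Hc; apply Hn; apply oc_body; auto.
  - intros x y H Hn. destruct H.
    + constructor.
    + rewrite prune_e_num. constructor.
    + rewrite prune_e_case. constructor.
      * apply up_H; auto. intros Hc; apply Hn; apply oc_head; auto.
      * intros i. apply up_E; auto. intros Hc; apply Hn; eapply oc_br; eauto.
  - intros x y H Hn. destruct H.
    + constructor.
    + destruct (classic (hbad Pl Pv (HVar v a'))) as [Hb|Hb].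
      * exfalso. destruct Hb as [Hb|Hb]; apply Hn.
        -- apply oc_var; auto.
        -- apply oc_vargs. apply abad_occ. eapply abad_mle; eauto.
      * rewrite prune_h_var by auto. constructor. apply up_A; auto.
        intros Hc; apply Hn; apply oc_vargs; auto.
    + destruct (classic (hbad Pl Pv (HApp p' a'))) as [Hb|Hb].
      * exfalso. destruct Hb as [Hb|Hb]; apply Hn.
        -- apply oc_app. destruct H. simpl in Hb. apply oc_lam; auto.
        -- apply oc_appargs. apply abad_occ. eapply abad_mle; eauto.
      * rewrite prune_h_app by auto. constructor.
        -- apply up_P; auto. intros Hc; apply Hn; apply oc_app; auto.
        -- apply up_A; auto. intros Hc; apply Hn; apply oc_appargs; auto.
    + rewrite prune_h_exp. constructor. apply up_E; auto.
      intros Hc; apply Hn; apply oc_exp; auto.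
  - intros x y H Hn. destruct H.
    + rewrite prune_a_nil. constructor.
    + rewrite prune_a_cons. constructor.
      * apply up_P; auto. intros Hc; apply Hn; apply oc_hd; auto.
      * apply up_A; auto. intros Hc; apply Hn; apply oc_tl; auto.
Qed.

Ltac pinv H :=
  repeat match type of H with
  | _ = prune_p _ _ ?p => destruct p; rewrite prune_p_eq in H
  | _ = prune_e _ _ ?e => destruct e; [rewrite prune_e_bot in H|rewrite prune_e_num in H|rewrite prune_e_case in H]
  | _ = prune_h ?Pl ?Pv ?h =>
      let Hb := fresh "Hb" in
      destruct (classic (hbad Pl Pv h)) as [Hb|Hb];
      [rewrite (prune_h_bad _ _ _ Hb) in H
      |destruct h; [rewrite (prune_h_var _ _ _ _ Hb) in H|rewrite (prune_h_app _ _ _ _ Hb) in H|rewrite prune_h_exp in H]]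
  | _ = prune_a _ _ ?a => destruct a; [rewrite prune_a_nil in H|rewrite prune_a_cons in H]
  end; try discriminate H; inversion H; subst; clear H.

Lemma occ_prune Pl Pv :
 (forall x, occP Pl Pv x -> forall p, x = prune_p Pl Pv p -> pbad Pl p) /\
 (forall x, occE Pl Pv x -> forall e, x = prune_e Pl Pv e -> False) /\
 (forall x, occH Pl Pv x -> forall h, x = prune_h Pl Pv h -> False) /\
 (forall x, occA Pl Pv x -> forall a, x = prune_a Pl Pv a -> abad Pl a).
Proof.
  apply occ_mut; intros;
  match goal with H : _ = _ |- _ => pinv H end.
  all: simpl in *; eauto using abad.
  all: try solve [match goal with H: occE _ _ MBot |- _ => inversion H end].
  all: try solve [apply Hb; simpl; eauto]. all: exfalso; eauto.
Qed.

Lemma lub_clean Pl Pv T P : is_lub T P -> (forall m, ~ occE Pl Pv (T m)) -> ~ occE Pl Pv P.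
Proof.
  intros [H1 H2] HT Hc.
  assert (Hle : mleE P (prune_e Pl Pv P)).
  { apply H2. intros m. apply up_E; auto. }
  eapply (proj1 (proj2 (occ_prune Pl Pv))); [|reflexivity].
  eapply (proj1 (proj2 (occ_mle Pl Pv))); eauto.
Qed.

Definition BL (k : nat) (ts : list ty) : Prop := exists tau, In tau ts /\ k < lv tau.
Definition BV (k : nat) (g : atom) (v : var) : Prop := exists a, v = Free a /\ a <> g /\ k < lv (aty a).
Definition clean k g p := ~ occP (BL k) (BV k g) p.

Lemma BV_bnd k g j : ~ BV k g (Bnd j). Proof. intros [a [H _]]; discriminate. Qed.
Lemma BL_nil k : ~ BL k []. Proof. intros [t [H _]]; inversion H. Qed.

Lemma occ_mono Pl Pv Pl' Pv' (Hl : forall ts, Pl ts -> Pl' ts) (Hv : forall v, Pv v -> Pv' v) :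
 (forall x, occP Pl Pv x -> occP Pl' Pv' x) /\
 (forall x, occE Pl Pv x -> occE Pl' Pv' x) /\
 (forall x, occH Pl Pv x -> occH Pl' Pv' x) /\
 (forall x, occA Pl Pv x -> occA Pl' Pv' x).
Proof. apply occ_mut; intros; solve [econstructor; eauto | eapply oc_br; eauto]. Qed.

Definition TRv {X} (occ : (list ty -> Prop) -> (var -> Prop) -> X -> Prop) k g (x : X) : Prop :=
  (forall tau, occ (fun ts => In tau ts) (fun _ => False) x -> lv tau <= k) /\
  (forall a, occ (fun _ => False) (fun v => v = Free a) x -> a = g \/ lv (aty a) <= k).

Lemma occ_TR k g :
 (forall x, occP (BL k) (BV k g) x -> TRv occP k g x -> False) /\
 (forall x, occE (BL k) (BV k g) x -> TRv occE k g x -> False) /\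
 (forall x, occH (BL k) (BV k g) x -> TRv occH k g x -> False) /\
 (forall x, occA (BL k) (BV k g) x -> TRv occA k g x -> False).
Proof.
  unfold TRv. apply occ_mut; intros.
  all: try solve [match goal with IH : (_ /\ _) -> False, T : _ /\ _ |- _ =>
          destruct T as [T1 T2]; apply IH; split; intros; [apply T1 | apply T2]; solve [econstructor; eauto | eapply oc_body; eauto | eapply oc_br; eauto | eapply oc_vargs; eauto | eapply oc_appargs; eauto | eapply oc_tl; eauto] end].
  - destruct H as [tau [Hi Hl]]. destruct H0 as [T1 _].
    assert (lv tau <= k) by (apply T1; constructor; auto). lia.
  - destruct H as [a0 [Heq [Hn Hl]]]. subst. destruct H0 as [_ T2].
    destruct (T2 a0) as [?|?]; [constructor; auto|contradiction|lia].
Qed.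

Lemma reg_clean k g p : term_regular k g p -> clean k g p.
Proof. intros H Hc. exact (proj1 (occ_TR k g) p Hc H). Qed.

Lemma clean_reg k g p : clean k g p -> term_regular k g p.
Proof.
  intros H. split.
  - intros tau Ht. destruct (Nat.le_gt_cases (lv tau) k) as [?|Hl]; auto. exfalso. apply H.
    refine (proj1 (occ_mono (fun ts => In tau ts) (fun _ => False) (BL k) (BV k g) _ _) _ Ht).
    + intros ts Hi. exists tau; auto.
    + intros v [].
  - intros a Ha. destruct (classic (a = g)) as [?|Hn]; auto.
    destruct (Nat.le_gt_cases (lv (aty a)) k) as [?|Hl]; auto. exfalso. apply H.
    refine (proj1 (occ_mono (fun _ => False) (fun v => v = Free a) (BL k) (BV k g) _ _) _ Ha).
    + intros ts [].
    + intros v ->. exists a; auto.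
Qed.

Lemma lv_cons s l : lv (Arrs (s :: l)) = Nat.max (S (lv s)) (lv (Arrs l)).
Proof. reflexivity. Qed.

Lemma lv_Arrs n ts : lv (Arrs ts) <= S n <-> (forall t, In t ts -> lv t <= n).
Proof.
  induction ts as [|s l IH].
  - simpl. split; intros; [contradiction|lia].
  - rewrite lv_cons. split.
    + intros H t [->|Hi]; [lia|]. apply IH; auto. lia.
    + intros H. assert (lv s <= n) by (apply H; left; auto).
      assert (lv (Arrs l) <= S n) by (apply IH; intros; apply H; right; auto). lia.
Qed.

Lemma clean_bisim k g p p' : clean k g p -> bisimP p p' -> clean k g p'.
Proof. intros H Hb Hc. apply H. eapply (proj1 (occ_bisim _ _)); eauto. Qed.

Lemma lv_in t ts : In t ts -> S (lv t) <= lv (Arrs ts).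
Proof.
  induction ts as [|s l IH]; [simpl; tauto|]. rewrite lv_cons. intros [->|Hi]; [lia|].
  specialize (IH Hi). lia.
Qed.

Lemma clean_abs k g x p : lv (aty x) <= k -> clean k g p -> clean k g (abs x p).
Proof.
  destruct p as [ts e]; simpl. intros Hx Hp Hc. inversion Hc; subst.
  - destruct H0 as [tau [[<-|Hi] Hl]]; [lia|]. apply Hp; constructor; exists tau; auto.
  - apply Hp; apply oc_body.
    eapply (proj1 (proj2 (occ_subst _ _ (BV_bnd k g)))); [eassumption| |reflexivity].
    intros [a|j]; simpl.
    + destruct (excluded_middle_informative (a = x)); simpl; auto.
      intros Hc'; exfalso; eapply BV_bnd; eauto.
    + destruct (j <? length ts); simpl; intros Hc'; exfalso; eapply BV_bnd; eauto.
Qed.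

Lemma clean_rsub4 k g p (f : nat -> option nat) : clean k g p -> clean k g (rsub (fun i => ofopt (f i)) p).
Proof.
  intros Hp Hc. destruct (occ_rsub_p _ _ (BV_bnd k g) _ _ Hc) as [H|[i H]]; auto.
  destruct (f i); simpl in H; inversion H.
Qed.

Lemma clean_rsub5 k g p d e : clean k g p -> clean k g (MLam [] d) -> clean k g (MLam [] e) ->
  clean k g (rsub (fun i => match i with 0 => d | S _ => e end) p).
Proof.
  intros Hp Hd He Hc. destruct (occ_rsub_p _ _ (BV_bnd k g) _ _ Hc) as [H|[i H]]; auto.
  destruct i; [apply Hd|apply He]; apply oc_body; auto.
Qed.

Lemma clean_plug k g sigmas e qs P t : lv (Arrs sigmas) <= k ->
  clean k g (MLam (Arrs sigmas :: sigmas) e) -> ~ occA (BL k) (BV k g) qs ->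
  Plug sigmas e qs P -> evalE P t -> clean k g (MLam [] t).
Proof.
  intros Hlv He Hq Hp Hev.
  assert (Hm : clean k g (MLam sigmas e)).
  { intros Hc; inversion Hc; subst.
    - destruct H0 as [tau [Hi Hl]]. pose proof (lv_in _ _ Hi). lia.
    - apply He; apply oc_body; auto. }
  assert (Hsg : sgood (BL k) (BV k g) (plug_sub sigmas e qs)).
  { intros [a|j]; simpl; auto.
    destruct (j <? length sigmas); simpl.
    - intros Hc. unfold shift_p in Hc.
      pose proof (proj1 (occ_ren _ _ (BV_bnd k g)) _ Hc _ _ eq_refl) as H1.
      destruct (occ_anth _ _ _ _ H1) as [H2|H2]; [auto|eapply BL_nil; eauto].
    - destruct (j =? length sigmas); simpl.
      + intros Hc. unfold shift_p in Hc.
        exact (Hm (proj1 (occ_ren _ _ (BV_bnd k g)) _ Hc _ _ eq_refl)).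
      + intros Hc; exfalso; eapply BV_bnd; eauto. }
  assert (Hit : forall m, ~ occE (BL k) (BV k g) (Pi_iter sigmas e qs m)).
  { induction m; unfold Pi_iter; simpl.
    - intros Hc; apply He; apply oc_body; auto.
    - intros Hc. apply IHm.
      exact (proj1 (proj2 (occ_subst _ _ (BV_bnd k g))) _ Hc _ _ Hsg eq_refl). }
  assert (HT : forall m, ~ occE (BL k) (BV k g) (circ_e (length sigmas) 0 (Pi_iter sigmas e qs m))).
  { intros m Hc. apply (Hit m). exact (proj1 (proj2 (occ_circ _ _)) _ Hc _ _ _ eq_refl). }
  pose proof (lub_clean _ _ _ _ Hp HT) as HP.
  intros Hc; inversion Hc; subst.
  - eapply BL_nil; eauto.
  - exact (proj1 (proj2 (occ_eval _ _ (BV_bnd k g) (BL_nil k))) _ H0 _ Hev HP).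
Qed.

Lemma allG_root k P G p (D : Gen k G p) : allG P D -> P G p.
Proof. destruct D; simpl; tauto. Qed.

Lemma allL_clean k g G qs sigmas (L : GenL k G qs sigmas) :
  allL (g_regular k g) L -> ~ occA (BL k) (BV k g) qs.
Proof.
  induction L; simpl.
  - intros _ Hc; inversion Hc.
  - intros [HD HL] Hc. inversion Hc; subst.
    + apply allG_root in HD. destruct HD as [_ HD]. exact (reg_clean _ _ _ HD H0).
    + exact (IHL HL H0).
Qed.

Lemma ptype_abs x p : ptype (abs x p) = match ptype p with Arrs ts => Arrs (aty x :: ts) end.
Proof. destruct p; reflexivity. Qed.
Lemma ptype_rsub f p : ptype (rsub f p) = ptype p.
Proof. destruct p; reflexivity. Qed.

Fixpoint mainG k g (Hg : lv (aty g) <= k + 2) G p (D : Gen k G p) {struct D} :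
  env_regular k g G -> lv (ptype p) <= S k -> allG (g_regular k g) D
with mainL k g (Hg : lv (aty g) <= k + 2) G qs sigmas (L : GenL k G qs sigmas) {struct L} :
  env_regular k g G -> (forall s, In s sigmas -> lv s <= S k) -> allL (g_regular k g) L.
Proof.
  - destruct D; intros HG Hty; simpl.
    +
      assert (HL : allL (g_regular k g) g0).
      { apply mainL; auto. intros s Hs.
        assert (lv (aty x) <= k + 2).
        { destruct (classic (x = g)) as [->|Hn]; auto. destruct HG as [_ HG]. specialize (HG x i Hn). lia. }
        pose proof (lv_in _ _ Hs). rewrite e in H. lia. }
      split; auto. split; auto. apply clean_reg.
      eapply clean_bisim; eauto. intros Hc. inversion Hc; subst.
      * eapply BL_nil; eauto.
      * inversion H0; subst.
        -- inversion H1; subst.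
           ++ destruct H2 as [a [Ha [Hn Hl]]]. inversion Ha; subst.
              destruct HG as [_ HG]. specialize (HG a i Hn). lia.
           ++ exact (allL_clean _ _ _ _ _ _ HL H2).
        -- inversion H1.
    +
      pose proof (ptype_bisim _ _ b) as Hpt. rewrite ptype_abs in Hpt.
      destruct (ptype p) as [ts] eqn:Ept. rewrite <- Hpt in Hty.
      rewrite lv_cons in Hty.
      assert (Hx : lv (aty x) <= k) by lia.
      assert (HG' : env_regular k g (x :: G)).
      { destruct HG as [Hg1 Hg2]. split; [right; auto|].
        intros a [->|Ha] Hn; auto. }
      assert (HD : allG (g_regular k g) D) by (apply mainG; auto; rewrite Ept; lia).
      split; auto. split; auto. apply clean_reg.
      eapply clean_bisim; eauto. apply clean_abs; auto.
      apply allG_root in HD. apply reg_clean, HD.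
    +
      split; auto. split; auto. apply clean_reg.
      eapply clean_bisim; eauto. intros Hc; inversion Hc; subst.
      * eapply BL_nil; eauto.
      * inversion H0.
    +
      pose proof (ptype_bisim _ _ b) as Hpt. rewrite ptype_rsub in Hpt.
      assert (HD : allG (g_regular k g) D) by (apply mainG; auto; rewrite Hpt; auto).
      split; auto. split; auto. apply clean_reg.
      eapply clean_bisim; eauto. apply clean_rsub4.
      apply allG_root in HD. apply reg_clean, HD.
    +
      pose proof (ptype_bisim _ _ b) as Hpt. rewrite ptype_rsub in Hpt.
      assert (HD1 : allG (g_regular k g) D1) by (apply mainG; auto; rewrite Hpt; auto).
      assert (HD2 : allG (g_regular k g) D2) by (apply mainG; auto; simpl; lia).
      assert (HD3 : allG (g_regular k g) D3) by (apply mainG; auto; simpl; lia).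
      split; [|auto]. split; auto. apply clean_reg.
      eapply clean_bisim; eauto. apply clean_rsub5.
      * apply allG_root in HD1. apply reg_clean, HD1.
      * apply allG_root in HD2. apply reg_clean, HD2.
      * apply allG_root in HD3. apply reg_clean, HD3.
    +
      assert (HD : allG (g_regular k g) D) by (apply mainG; auto; simpl ptype; rewrite lv_cons; lia).
      assert (HL : allL (g_regular k g) g0).
      { apply mainL; auto. intros s Hs. pose proof (lv_in _ _ Hs). lia. }
      split; [|auto]. split; auto. apply clean_reg.
      eapply clean_bisim; eauto. eapply clean_plug; eauto.
      * apply allG_root in HD. apply reg_clean, HD.
      * exact (allL_clean _ _ _ _ _ _ HL).
  - destruct L; intros HG Hs; simpl; auto.
    split.
    + apply mainG; auto. rewrite e. apply Hs. left; auto.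
    + apply mainL; auto. intros s0 Hs0. apply Hs. right; auto.
Qed.

Theorem proposition3p11 :
  forall (k : nat) (g : atom) (G : list atom) (t : mproc),
    1 <= k ->
    lv (aty g) = k + 2 ->
    g_regular k g G t ->
    denotable k G t ->
    forall D : Gen k G t, allG (g_regular k g) D.
Proof.
  intros k g G t _ Hg [HG Ht] _ D.
  apply mainG; auto; [lia|].
  destruct t as [ts e]. simpl. apply lv_Arrs. intros tau Hi.
  destruct Ht as [Ht _]. apply Ht. constructor. auto.
Qed.
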